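(* Let $n \ge 0$. Then, in $W$ and in every $W_{n+k}$ ($k\ge 0$): (i) every occurrence of $W_n$ other than the first one is immediately preceded by either $W_n$ or $W_n1$; (ii) every occurrence of $W_n$ other than the last one (in $W$: every occurrence) is immediately followed by either $W_n$ or $1W_n$; (iii) the word $W_nW_nW_nW_n$ does not occur.
   Context: Words are finite strings over $\{0,1\}$. Define $W_0 = 0$ and $W_{m+1} = W_m W_m 1 W_m$ for $m\ge 0$. Since each $W_m$ is an initial segment of $W_{m+1}$, there is a unique infinite word $W = W(0)W(1)W(2)\cdots$ (indexed from position $0$) such that every $W_m$ is an initial segment of $W$. An occurrence of a word $u$ in $v$ is a position where $u$ appears as a contiguous block of $v$. *)

(* Defs.v *)
(* Words over {0,1} are encoded as seq bool: 0 = false, 1 = true. *)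
From mathcomp Require Import all_boot.
Set Implicit Arguments. Unset Strict Implicit. Unset Printing Implicit Defensive.

Fixpoint Wf (m : nat) : seq bool :=
  match m with
  | 0 => [:: false]
  | m'.+1 => Wf m' ++ Wf m' ++ true :: Wf m'
  end.

(* w is the limit word: every W_m is an initial segment of w *)
Definition has_all_W_prefixes (w : nat -> bool) : Prop :=
  forall m i, i < size (Wf m) -> w i = nth false (Wf m) i.

Definition occ (u v : seq bool) (p : nat) : Prop :=
  p + size u <= size v /\ take (size u) (drop p v) = u.

Definition occI (u : seq bool) (w : nat -> bool) (p : nat) : Prop :=
  forall j, j < size u -> w (p + j) = nth false u j.

Definition preceded (x v : seq bool) (p : nat) : Prop :=
  size x <= p /\ occ x v (p - size x).
Definition precededI (x : seq bool) (w : nat -> bool) (p : nat) : Prop :=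
  size x <= p /\ occI x w (p - size x).

Definition followed (u x v : seq bool) (p : nat) : Prop := occ x v (p + size u).
Definition followedI (u x : seq bool) (w : nat -> bool) (p : nat) : Prop :=
  occI x w (p + size u).

(* Main.v *)
Require Import Defs.
From mathcomp Require Import all_boot.
From mathcomp Require Import zify.
Set Implicit Arguments. Unset Strict Implicit. Unset Printing Implicit Defensive.

Lemma occP (u v : seq bool) p : occ u v p <->
  (p + size u <= size v /\ forall j, j < size u -> nth false v (p + j) = nth false u j).
Proof.
rewrite /occ; split => [[Hs Ht] | [Hs Hn]]; split => //.
- move=> j Hj. by rewrite -Ht nth_take // nth_drop.
- apply: (@eq_from_nth _ false).
  + rewrite size_take size_drop; case: ifP => H; lia.
  + move=> j; rewrite size_take size_drop => Hj.
    have Hj' : j < size u by move: Hj; case: ifP => H; lia.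
    by rewrite nth_take // nth_drop Hn.
Qed.

Lemma occ_cat (a b v : seq bool) p : occ (a ++ b) v p -> occ a v p /\ occ b v (p + size a).
Proof.
move/occP=> [Hs Hn]; rewrite size_cat in Hs; split; apply/occP; split; try lia.
- move=> j Hj; rewrite Hn ?nth_cat ?Hj // size_cat; lia.
- move=> j Hj; rewrite -addnA Hn ?nth_cat; last by rewrite size_cat; lia.
  case: ifP => H; [lia| by rewrite addKn].
Qed.

Lemma occ_down (x u v : seq bool) p : occ u (x ++ v) p -> size x <= p -> occ u v (p - size x).
Proof.
move/occP=> [Hs Hn] Hp; rewrite size_cat in Hs; apply/occP; split; first lia.
move=> j Hj; rewrite -Hn // nth_cat; case: ifP => H; first (move: H; lia).
congr nth; lia.
Qed.

Lemma occ_up (x u v : seq bool) p : occ u v p -> occ u (x ++ v) (size x + p).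
Proof.
move/occP=> [Hs Hn]; apply/occP; rewrite size_cat; split; first lia.
move=> j Hj; rewrite nth_cat; case: ifP => H; first (move: H; lia).
rewrite -Hn //; congr nth; lia.
Qed.

Lemma occ_prefix (u v : seq bool) : occ u (u ++ v) 0.
Proof. rewrite /occ /= size_cat drop0 take_size_cat //; split => //; lia. Qed.

Fixpoint build (w : seq bool) (gs : seq bool) : seq bool :=
  match gs with [::] => w | g :: gs' => w ++ nseq g true ++ build w gs' end.

Fixpoint expand (gs : seq bool) : seq bool :=
  match gs with [::] => [:: false; true] | g :: gs' => [:: false, true, g & expand gs'] end.

Fixpoint G k := match k with 0 => [::] | k'.+1 => expand (G k') end.

Fixpoint sp (L : nat) (gs : seq bool) (p : nat) : Prop :=
  p = 0 \/ match gs with [::] => False | g :: gs' => L + g <= p /\ sp L gs' (p - (L + g)) end.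

Lemma sp_eq L gs a b : sp L gs a -> a = b -> sp L gs b.
Proof. by move=> H <-. Qed.

Lemma build_expand w gs : build w (expand gs) = build (w ++ w ++ true :: w) gs.
Proof.
elim: gs => [|g gs IH] /=; first by [].
by rewrite IH -!catA.
Qed.

Lemma Wf_build n k : Wf (n + k) = build (Wf n) (G k).
Proof.
elim: k n => [|k IH] n; first by rewrite addn0.
by rewrite addnS -addSn IH /= build_expand.
Qed.

Lemma size_WfS n : size (Wf n.+1) = 3 * size (Wf n) + 1.
Proof. rewrite /= !size_cat /=; lia. Qed.

Lemma size_Wf n : n < size (Wf n).
Proof. elim: n => [|n IH] //; rewrite size_WfS; lia. Qed.

Lemma build_prefix w gs : occ w (build w gs) 0.
Proof. case: gs => [|g gs] /=; [by move: (occ_prefix w [::]); rewrite cats0 | exact: occ_prefix]. Qed.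

Lemma occ_eq (u v : seq bool) a b : occ u v a -> a = b -> occ u v b.
Proof. by move=> H <-. Qed.

Lemma sp_exp_nil L x : sp L (expand [::]) x <-> x = 0 \/ x = L \/ x = 2 * L + 1.
Proof.
simpl; split.
- case=> [->|[H1 [H2|[H3 [H4|[]]]]]]; [by left|right;left;lia|right;right;lia].
- case=> [->|[->|->]]; [by left| right | right].
  + split; [lia|left;lia].
  + split; [lia|right; split; [lia|left;lia]].
Qed.

Lemma sp_exp_cons L g E x : sp L (expand (g :: E)) x <->
  x = 0 \/ x = L \/ x = 2 * L + 1 \/ (3 * L + 1 + g <= x /\ sp L (expand E) (x - (3 * L + 1 + g))).
Proof.
rewrite [expand _]/=; split.
- case=> [->|[H1 [H2|[H3 [H4|[H5 H6]]]]]]; [by left|right;left;lia|right;right;left;lia|].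
  right; right; right; split; [lia| apply: (sp_eq H6); lia].
- case=> [->|[->|[->|[H1 H2]]]]; [by left| right | right | right].
  + split; [lia|left;lia].
  + split; [lia|right; split; [lia|left;lia]].
  + split; [lia|right; split; [lia|right; split; [lia|]]].
    apply: (sp_eq H2); lia.
Qed.

Lemma sp_exp_head L gs x : sp L (expand gs) x -> x = 0 \/ x = L \/ 2 * L + 1 <= x.
Proof.
case: gs => [|g E]; [rewrite sp_exp_nil|rewrite sp_exp_cons]; lia.
Qed.

Lemma key L gs p : 0 < L -> sp L (expand gs) p -> sp L (expand gs) (p + L) ->
  sp L (expand gs) (p + (2 * L + 1)) -> sp (3 * L + 1) gs p.
Proof.
move=> L0; elim: gs p => [|g gs IH] p.
- rewrite !sp_exp_nil => H1 H2 H3; left; lia.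
- rewrite !sp_exp_cons => H1 H2 H3.
  case: H1 => [->|[H1|[H1|[H1 H1']]]]; first by left.
  + exfalso; case: H2 => [|[|[|[]]]]; lia.
  + exfalso; case: H2 => [|[|[|[H2 H2']]]]; try lia.
    case: H3 => [|[|[|[H3 H3']]]]; try lia.
    have := sp_exp_head H3'; lia.
  + right; split; first lia.
    apply: IH => //.
    * case: H2 => [|[|[|[H2 H2']]]]; try lia. apply: (sp_eq H2'); lia.
    * case: H3 => [|[|[|[H3 H3']]]]; try lia. apply: (sp_eq H3'); lia.
Qed.

Lemma sync0 gs p : occ [:: false] (build [:: false] gs) p -> sp 1 gs p.
Proof.
elim: gs p => [|g gs IH] p /=.
- move/occP=> [H _]; left; lia.
- case: (posnP p) => [-> _|Hp]; first by left.
  move=> H; right.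
  have H1 : occ [:: false] (nseq g true ++ build [:: false] gs) (p - 1).
    by have := occ_down (x := [:: false]) H; apply; rewrite /=.
  clear H; case: g H1 => /= H1.
  + case: (posnP (p - 1)) => Hq.
    * move/occP: H1 => [_ Hn]; have := Hn 0 erefl.
      by rewrite Hq.
    * have := occ_down (x := [:: true]) H1 => /(_ Hq) /= H2.
      split; first lia. apply: (sp_eq (IH _ H2)); lia.
  + split; first lia. apply: (sp_eq (IH _ H1)); lia.
Qed.

Lemma size_pos n : 0 < size (Wf n).
Proof. have := size_Wf n; lia. Qed.

Lemma sync n gs p : occ (Wf n) (build (Wf n) gs) p -> sp (size (Wf n)) gs p.
Proof.
elim: n gs p => [|n IH] gs p; first exact: sync0.
rewrite size_WfS [Wf n.+1]/= -build_expand => H.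
have [H1 Hb] := occ_cat H.
have [H2 Hc] := occ_cat Hb.
have H3 : occ (Wf n) (build (Wf n) (expand gs)) (p + size (Wf n) + size (Wf n) + 1).
  move/occP: Hc => [Hs Hn]; apply/occP; split; first (simpl in Hs; lia).
  move=> j Hj; have := Hn j.+1; rewrite /= => <-; [congr nth; lia| lia].
apply: key; first exact: size_pos.
- exact: IH.
- exact: IH.
- apply: (sp_eq (IH _ _ H3)); lia.
Qed.

Lemma fin_i w gs p : sp (size w) gs p -> 0 < p ->
  preceded w (build w gs) p \/ preceded (w ++ [:: true]) (build w gs) p.
Proof.
elim: gs p => [|g gs IH] p /=.
- case=> [->|[]] //.
- case=> [->|[Hp Hs]] // p0.
  case: (posnP (p - (size w + g))) => Hq.
  + case: g Hp Hs Hq => /= Hp Hs Hq.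
    * right; split; rewrite size_cat /=; first lia.
      have -> : p - (size w + 1) = 0 by lia.
      by rewrite (_ : true :: build w gs = [:: true] ++ build w gs) // catA; apply: occ_prefix.
    * left; split; first lia.
      have -> : p - size w = 0 by lia.
      exact: occ_prefix.
  + have [[Hs1 Ho]|[Hs1 Ho]] := IH _ Hs Hq; [left|right]; split; try lia;
    have := occ_up (w ++ nseq g true) Ho; rewrite catA size_cat size_nseq => Ho';
    apply: (occ_eq Ho'); lia.
Qed.

Lemma fin_ii w gs p q : sp (size w) gs p -> sp (size w) gs q -> p < q ->
  followed w w (build w gs) p \/ followed w (true :: w) (build w gs) p.
Proof.
rewrite /followed.
elim: gs p q => [|g gs IH] p q /=.
- case=> [->|[]] //; case=> [->|[]] //.
- case=> [->|[Hp Hs]].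
  + move=> _ _; rewrite add0n.
    case: g => /=; [right|left].
    * have := occ_up w (occ_prefix (true :: w) (drop (size w) (build w gs))).
      rewrite addn0 /= => H; rewrite -[build w gs](cat_take_drop (size w)).
      suff -> : take (size w) (build w gs) = w by [].
      have /occP [Hs1 Hn] := build_prefix w gs.
      apply: (@eq_from_nth _ false); rewrite size_take; first by case: ifP; lia.
      move=> j Hj; rewrite nth_take; last by move: Hj; case: ifP; lia.
      by rewrite -Hn //; move: Hj; case: ifP; lia.
    * have := occ_up w (build_prefix w gs); by rewrite addn0.
  + case=> [Hq0|[Hq Hs']] Hpq; first lia.
    have Hpq' : p - (size w + g) < q - (size w + g) by lia.
    have [Ho|Ho] := IH _ _ Hs Hs' Hpq'; [left|right];
    have := occ_up (w ++ nseq g true) Ho; rewrite catA size_cat size_nseq => Ho';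
    apply: (occ_eq Ho'); lia.
Qed.

Fixpoint has3 (gs : seq bool) : bool :=
  match gs with
  | [::] => false
  | g :: gs' => (~~ g && ~~ nth true gs' 0 && ~~ nth true gs' 1) || has3 gs'
  end.

Lemma has3_expand gs : has3 (expand gs) = false.
Proof.
elim: gs => [|g gs IH] //=. rewrite IH.
by case: gs {IH} => [|? ?] /=; rewrite !andbF.
Qed.

Lemma has3_G k : has3 (G k) = false.
Proof. case: k => [|k] //=; exact: has3_expand. Qed.

Lemma spc L gs x : sp L gs x -> 0 < x ->
  exists g gs', gs = g :: gs' /\ L + g <= x /\ sp L gs' (x - (L + g)).
Proof.
case: gs => [|g gs] /= H Hx; first by case: H => [?|[]]; lia.
case: H => [?|[H1 H2]]; first lia. by exists g, gs.
Qed.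

Lemma four L gs p : 0 < L -> sp L gs p -> sp L gs (p + L) -> sp L gs (p + 2 * L) ->
  sp L gs (p + 3 * L) -> has3 gs.
Proof.
move=> L0; elim: gs p => [|g gs IH] p.
- move=> _ /spc [|g [gs [] //]]; lia.
- case: (posnP p) => [-> _|Hp].
  + clear IH; rewrite !add0n => HA HB HC.
    have [g1 [gs1 [[<- <-] [H1 _]]]] := spc HA L0.
    have {H1} g0 : g = false by case: g H1 {HA HB HC}; lia.
    subst g.
    have [x1 [gsb [E1 [_ H2]]]] := spc HB (ltac:(lia)); case: E1 => E1a E1b; subst x1 gsb.
    have [x2 [gsc [E2 [_ H3]]]] := spc HC (ltac:(lia)); case: E2 => E2a E2b; subst x2 gsc.
    have [g2 [gs3 [E [H4 H5]]]] := spc H2 (ltac:(lia)); subst gs.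
    have {H4} g20 : g2 = false by case: g2 H4 {HA H2 H3 HB HC H5}; lia.
    subst g2.
    have [x4 [gs4 [E4 [_ H7]]]] := spc H3 (ltac:(lia)); case: E4 => E4a E4b; subst x4 gs3.
    have [g5 [gs5 [E5 [H8 _]]]] := spc H7 (ltac:(lia)); subst gs4.
    have -> : g5 = false by case: g5 H8 {HA HB H2 H7 H3 HC H5}; lia.
    by [].
  + move=> HA HB HC HD.
    have [_ [_ [[<- <-] [H0 H0']]]] := spc HA Hp.
    have [_ [_ [[<- <-] [_ H1']]]] := spc HB (ltac:(lia)).
    have [_ [_ [[<- <-] [_ H2']]]] := spc HC (ltac:(lia)).
    have [_ [_ [[<- <-] [_ H3']]]] := spc HD (ltac:(lia)).
    apply/orP; right; apply: (IH _ H0').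
    * apply: (sp_eq H1'); lia.
    * apply: (sp_eq H2'); lia.
    * apply: (sp_eq H3'); lia.
Qed.

Lemma occ_app_r (u a b : seq bool) p : occ u a p -> occ u (a ++ b) p.
Proof.
move/occP=> [Hs Hn]; apply/occP; rewrite size_cat; split; first lia.
move=> j Hj; rewrite nth_cat; case: ifP => H; [exact: Hn | move: H; lia].
Qed.

Lemma occ_I w (H : has_all_W_prefixes w) m u p : occ u (Wf m) p -> occI u w p.
Proof.
move/occP=> [Hs Hn] j Hj; rewrite (H m) ?Hn //; lia.
Qed.

Lemma I_occ w (H : has_all_W_prefixes w) m u p : p + size u <= size (Wf m) ->
  occI u w p -> occ u (Wf m) p.
Proof.
move=> Hs Hi; apply/occP; split => // j Hj; rewrite -(H m) ?Hi //; lia.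
Qed.

Lemma fin_all n k : let v := Wf (n + k) in
     (forall p, occ (Wf n) v p -> (exists q, q < p /\ occ (Wf n) v q) ->
        preceded (Wf n) v p \/ preceded (Wf n ++ [:: true]) v p) /\
     (forall p, occ (Wf n) v p -> (exists q, p < q /\ occ (Wf n) v q) ->
        followed (Wf n) (Wf n) v p \/ followed (Wf n) (true :: Wf n) v p) /\
     (forall p, ~ occ (Wf n ++ Wf n ++ Wf n ++ Wf n) v p).
Proof.
rewrite /= Wf_build; split; [|split].
- move=> p Hp [q [Hq _]]; apply: fin_i; [exact: sync | lia].
- move=> p Hp [q [Hq Hq']]; apply: (fin_ii (sync Hp) (sync Hq')) Hq.
- move=> p H.
  have [H1 Hb] := occ_cat H; have [H2 Hc] := occ_cat Hb; have [H3 H4] := occ_cat Hc.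
  have H3' : occ (Wf n) (build (Wf n) (G k)) (p + 2 * size (Wf n)).
    by apply: (occ_eq H3); lia.
  have H4' : occ (Wf n) (build (Wf n) (G k)) (p + 3 * size (Wf n)).
    by apply: (occ_eq H4); lia.
  have := four (size_pos n) (sync H1) (sync H2) (sync H3') (sync H4').
  by rewrite has3_G.
Qed.

Theorem mainTheorem2 (n : nat) :
  (forall w : nat -> bool, has_all_W_prefixes w ->
     (forall p, occI (Wf n) w p -> (exists q, q < p /\ occI (Wf n) w q) ->
        precededI (Wf n) w p \/ precededI (Wf n ++ [:: true]) w p) /\
     (forall p, occI (Wf n) w p ->
        followedI (Wf n) (Wf n) w p \/ followedI (Wf n) (true :: Wf n) w p) /\
     (forall p, ~ occI (Wf n ++ Wf n ++ Wf n ++ Wf n) w p)) /\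
  (forall k : nat, let v := Wf (n + k) in
     (forall p, occ (Wf n) v p -> (exists q, q < p /\ occ (Wf n) v q) ->
        preceded (Wf n) v p \/ preceded (Wf n ++ [:: true]) v p) /\
     (forall p, occ (Wf n) v p -> (exists q, p < q /\ occ (Wf n) v q) ->
        followed (Wf n) (Wf n) v p \/ followed (Wf n) (true :: Wf n) v p) /\
     (forall p, ~ occ (Wf n ++ Wf n ++ Wf n ++ Wf n) v p)).
Proof.
split; last exact: fin_all.
move=> w Hw; split; [|split].
- move=> p Hp [q [Hq Hq']].
  set K := p + size (Wf n).
  have Hs := size_Wf (n + K).
  have [Hi _] := fin_all n K.
  have := Hi p (I_occ Hw _ Hp) (ex_intro _ q (conj Hq (I_occ Hw _ Hq'))).
  have P1 : p + size (Wf n) <= size (Wf (n + K)) by lia.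
  have P2 : q + size (Wf n) <= size (Wf (n + K)) by lia.
  move=> /(_ P1 P2) [[Ha Hb]|[Ha Hb]]; [left|right]; split => //; exact: occ_I Hb.
- move=> p Hp.
  set K := p + size (Wf n).
  have Hs := size_Wf (n + K).
  have [_ [Hii _]] := fin_all n K.+1.
  have P1 : p + size (Wf n) <= size (Wf (n + K.+1)).
    rewrite addnS size_WfS; lia.
  have Hq : occ (Wf n) (Wf (n + K.+1)) (size (Wf (n + K))).
    rewrite addnS [Wf _.+1]/= -[size _]addn0; apply: occ_up; apply: occ_app_r.
    rewrite Wf_build; exact: build_prefix.
  have := Hii p (I_occ Hw P1 Hp) (ex_intro _ _ (conj (_ : p < size (Wf (n + K))) Hq)).
  move=> /(_ ltac:(lia)) [Ha|Ha]; [left|right]; exact: occ_I Ha.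
- move=> p Hp.
  set K := p + 4 * size (Wf n).
  have Hs := size_Wf (n + K).
  have [_ [_ Hiii]] := fin_all n K.
  apply: (Hiii p); apply: (I_occ Hw) Hp.
  rewrite !size_cat; lia.
Qed.
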